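(* Let $t$ be a planar binary tree with $n\ge1$ internal vertices, with leaves $l_1,\dots,l_{n+1}$ numbered from left to right, and let $\varphi$ be a level function on $t$. Let $\sigma=\sigma_{t,\varphi}\in S_n$ be the associated permutation. Then the map $j\mapsto l_{j+1}$ restricts to a bijection from the descent set $D(\sigma)=\{i\in\{1,\dots,n-1\}:\sigma(i)>\sigma(i+1)\}$ onto the set of descents of $t$.
   Context: A planar binary tree is a finite planar rooted tree in which every internal vertex has exactly two incoming edges (left and right) and one outgoing edge; leaves are the external incoming edges. Internal vertices are partially ordered by $u<v$ iff $u$ lies on the path from the root to $v$. A level function is a bijection $\varphi$ from the set of internal vertices onto $\{1,\dots,n\}$ which is decreasing for this order (if $u<v$ then $\varphi(u)>\varphi(v)$; so the root has level $n$). For $i=1,\dots,n$, let $u_i$ be the internal vertex lying between $l_i$ and $l_{i+1}$, i.e. the unique internal vertex such that $l_i$ lies in its left subtree and $l_{i+1}$ in its right subtree; then $\sigma_{t,\varphi}(i):=\varphi(u_i)$. A leaf of $t$ is a descent if it is not the leftmost leaf and it is the left incoming edge of its internal vertex. *)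

(* Defs.v *)
From mathcomp Require Import all_boot.
Set Implicit Arguments. Unset Strict Implicit. Unset Printing Implicit Defensive.

(* Planar binary trees.  A vertex is addressed by its path from the root:
   a sequence of booleans, false = go to the left incoming edge,
   true = go to the right incoming edge. *)
Inductive tree : Type := Leaf | Node of tree & tree.

Fixpoint nodes (t : tree) : seq (seq bool) :=
  match t with
  | Leaf => [::]
  | Node l r => [::] :: (map (cons false) (nodes l) ++ map (cons true) (nodes r))
  end.

Fixpoint leaves (t : tree) : seq (seq bool) :=
  match t with
  | Leaf => [:: [::]]
  | Node l r => map (cons false) (leaves l) ++ map (cons true) (leaves r)
  end.

Definition internal (t : tree) (u : seq bool) : bool := u \in nodes t.

Definition nint (t : tree) : nat := size (nodes t).

(* the leaf l_i, 1-indexed *)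
Definition leaf_at (t : tree) (i : nat) : seq bool := nth [::] (leaves t) i.-1.

(* u < v : u lies (strictly) on the path from the root to v *)
Definition vlt (u v : seq bool) : bool := prefix u v && (u != v).

Definition level_function (t : tree) (phi : seq bool -> nat) : Prop :=
  [/\ (forall u, internal t u -> 1 <= phi u <= nint t),
      {in internal t &, injective phi},
      (forall k, 1 <= k <= nint t -> exists2 u, internal t u & phi u = k)
    & (forall u v, internal t u -> internal t v -> vlt u v -> phi v < phi u)].

(* u_i : the unique internal vertex with l_i in its left subtree and
   l_{i+1} in its right subtree *)
Definition u_at (t : tree) (i : nat) : seq bool :=
  nth [::] [seq u <- nodes t | prefix (rcons u false) (leaf_at t i)
                               && prefix (rcons u true) (leaf_at t i.+1)] 0.

Definition sigma_tphi (t : tree) (phi : seq bool -> nat) (i : nat) : nat :=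
  phi (u_at t i).

Definition perm_descent (n : nat) (sigma : nat -> nat) (i : nat) : bool :=
  (1 <= i <= n.-1) && (sigma i.+1 < sigma i).

(* a leaf of t is a descent if it is not the leftmost leaf and it is the
   left incoming edge of its internal vertex *)
Definition tree_descent (t : tree) (p : seq bool) : bool :=
  [&& p \in leaves t, p != leaf_at t 1 & last true p == false].

(* Main.v *)
Require Import Defs.
From mathcomp Require Import all_boot.
From mathcomp Require Import zify.

Lemma size_leaves t : size (leaves t) = (nint t).+1.
Proof.
rewrite /nint; elim: t => //= l IHl r IHr.
by rewrite size_cat !size_map IHl IHr size_cat !size_map addnS addSn.
Qed.

Lemma nintN t : nint (Node t.1 t.2) = (nint t.1 + nint t.2).+1.
Proof. by rewrite /nint /= size_cat !size_map. Qed.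

Lemma first_leaf t : exists m, nth [::] (leaves t) 0 = nseq m false.
Proof.
elim: t => [|l [m Hm] r _]; first by exists 0.
exists m.+1 => /=; rewrite nth_cat size_map size_leaves /=.
by rewrite (nth_map [::]) ?Hm // size_leaves.
Qed.

Lemma last_leaf t : exists m, nth [::] (leaves t) (nint t) = nseq m true.
Proof.
elim: t => [|l _ r [m Hm]]; first by exists 0.
exists m.+1; rewrite (nintN (l, r)) /= nth_cat size_map size_leaves.
have -> : ((nint l + nint r).+1 < (nint l).+1) = false by lia.
have -> : (nint l + nint r).+1 - (nint l).+1 = nint r by lia.
by rewrite (nth_map [::]) ?Hm // size_leaves.
Qed.

Lemma consec t k : k < nint t -> exists u x y,
  [/\ u \in nodes t, nth [::] (leaves t) k = u ++ false :: nseq x true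
    & nth [::] (leaves t) k.+1 = u ++ true :: nseq y false].
Proof.
elim: t k => [//|l IHl r IHr] k.
rewrite (nintN (l, r)) /= => Hk.
rewrite !nth_cat !size_map !size_leaves.
case: (ltngtP k (nint l)) => Hkl.
- have [u [x [y [Hu H1 H2]]]] := IHl k Hkl.
  exists (false :: u), x, y.
  rewrite in_cons mem_cat map_f ?orbT //; split => //.
  + by rewrite ifT ?(nth_map [::]) ?H1 // ?size_leaves; lia.
  + by rewrite ifT ?(nth_map [::]) ?H2 // ?size_leaves; lia.
- have Hk' : k - (nint l).+1 < nint r by lia.
  have [u [x [y [Hu H1 H2]]]] := IHr _ Hk'.
  exists (true :: u), x, y.
  rewrite in_cons mem_cat (map_f (cons true)) ?orbT //; split => //.
  + rewrite ifF; last by lia.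
    by rewrite (nth_map [::]) ?H1 // size_leaves; lia.
  + rewrite ifF; last by lia.
    have -> : k.+1 - (nint l).+1 = (k - (nint l).+1).+1 by lia.
    by rewrite (nth_map [::]) ?H2 // size_leaves; lia.
- subst k. have [m Hm] := last_leaf l. have [m' Hm'] := first_leaf r.
  exists [::], m, m'; split => //.
  + by rewrite ltnSn (nth_map [::]) ?Hm // size_leaves.
  + by rewrite ltnn subnn (nth_map [::]) ?Hm' // size_leaves.
Qed.

Lemma uniq_split (v u : seq bool) (s1 s2 X Y : seq bool) :
  v ++ false :: s1 = u ++ false :: X -> v ++ true :: s2 = u ++ true :: Y -> v = u.
Proof.
elim: v u => [|b v IH] [|a u] //=.
- by move=> [<- _] [].
- by move=> [-> _] [].
- by move=> [-> E1] [E2]; rewrite (IH u E1 E2).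
Qed.

Lemma u_at_eq t k u x y : u \in nodes t ->
  nth [::] (leaves t) k = u ++ false :: nseq x true ->
  nth [::] (leaves t) k.+1 = u ++ true :: nseq y false ->
  u_at t k.+1 = u.
Proof.
move=> Hu H1 H2; rewrite /u_at /leaf_at /= H1 H2.
set s := filter _ _.
have us : u \in s.
  by rewrite mem_filter Hu -!cat_rcons !prefix_prefix.
have : nth [::] s 0 \in s by rewrite mem_nth // lt0n size_eq0; apply/eqP => E; rewrite E in us.
rewrite mem_filter => /andP [/andP [/prefixP [s1 E1] /prefixP [s2 E2]] _].
apply: (uniq_split _ _ s1 s2 (nseq x true) (nseq y false)).
  by rewrite -cat_rcons -E1.
by rewrite -cat_rcons -E2.
Qed.

Lemma nseqSr (n : nat) (a : bool) : nseq n.+1 a = rcons (nseq n a) a.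
Proof. by elim: n => //= n ->. Qed.

Lemma rc (u s : seq bool) b c : u ++ b :: rcons s c = rcons (u ++ b :: s) c.
Proof. by rewrite rcons_cat rcons_cons. Qed.

Lemma vlt_ext (u s : seq bool) b : vlt u (u ++ b :: s).
Proof.
rewrite /vlt prefix_prefix /=; apply/eqP => E.
by have := congr1 size E; rewrite size_cat /=; lia.
Qed.

Lemma desc_char t phi j : level_function t phi -> 1 <= j -> j < nint t ->
  (sigma_tphi t phi j.+1 < sigma_tphi t phi j) = (last true (leaf_at t j.+1) == false).
Proof.
case=> _ _ _ Hdec Hj Hjn.
have [u1 [x1 [y1 [Hu1 A1 B1]]]] := consec t j.-1 (ltac:(lia)).
have [u2 [x2 [y2 [Hu2 A2 B2]]]] := consec t j Hjn.
have ej : j.-1.+1 = j by lia.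
have U1 := u_at_eq _ _ _ _ _ Hu1 A1 B1. rewrite ej in U1 B1.
have U2 := u_at_eq _ _ _ _ _ Hu2 A2 B2.
rewrite /sigma_tphi U1 U2 /leaf_at /=.
have E : u1 ++ true :: nseq y1 false = u2 ++ false :: nseq x2 true by rewrite -B1 -A2.
rewrite A2; clear B1 A1 B2 U1 U2.
case: y1 E => [|y] E; case: x2 A2 E => [|x] A2 E.
- by have := congr1 (last true) E; rewrite !last_cat.
- rewrite nseqSr rc /= cats1 in E.
  move/rcons_inj: E => -[E]. subst u1.
  rewrite nseqSr rc last_rcons /=.
  apply/negbTE; rewrite -leqNgt; apply: ltnW; apply: Hdec => //; exact: vlt_ext.
- rewrite nseqSr rc cats1 in E.
  move/rcons_inj: E => -[E]. subst u2.
  rewrite cats1 last_rcons eqxx; apply: Hdec => //; exact: vlt_ext.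
- rewrite !nseqSr !rc in E.
  by have := congr1 (last true) E; rewrite !last_rcons.
Qed.

Lemma uniq_leaves t : uniq (leaves t).
Proof.
elim: t => //= l IHl r IHr.
rewrite cat_uniq !map_inj_uniq //; try by move=> ? ? [].
rewrite IHl IHr /= andbT; apply/hasPn => p /mapP [q _ ->].
by apply/mapP => [[q' _]].
Qed.

Theorem lemma5p2 (t : tree) (phi : seq bool -> nat) :
  1 <= nint t -> level_function t phi ->
  let sigma := sigma_tphi t phi in
  [/\ (forall j, perm_descent (nint t) sigma j -> tree_descent t (leaf_at t j.+1)),
      (forall j k, perm_descent (nint t) sigma j -> perm_descent (nint t) sigma k ->
                   leaf_at t j.+1 = leaf_at t k.+1 -> j = k)
    & (forall p, tree_descent t p ->
                 exists2 j, perm_descent (nint t) sigma j & leaf_at t j.+1 = p)].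
Proof.
move=> Hn Hphi sigma.
have Hs := size_leaves t. have Hu := uniq_leaves t.
have PD : forall j, perm_descent (nint t) sigma j =
   [&& 1 <= j, j < nint t & last true (leaf_at t j.+1) == false].
  move=> j; rewrite /perm_descent.
  case: (boolP (1 <= j)) => //= H1.
  case: (boolP (j < nint t)) => H2.
  - by rewrite (_ : j <= (nint t).-1) ?desc_char //; lia.
  - by rewrite (_ : j <= (nint t).-1 = false) //; lia.
split.
- move=> j; rewrite PD => /and3P [H1 H2 H3].
  rewrite /tree_descent H3 andbT /leaf_at /=; apply/andP; split.
    by apply: mem_nth; rewrite Hs; lia.
  by rewrite nth_uniq ?Hs //; lia.
- move=> j k; rewrite !PD /leaf_at /= => /and3P [H1 H2 _] /and3P [K1 K2 _] E.
  by apply/eqP; rewrite -(nth_uniq [::] _ _ Hu) ?E ?Hs //; lia.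
- move=> p /and3P [Hp Hp1 Hl].
  have Hi : index p (leaves t) < (nint t).+1 by rewrite -Hs index_mem.
  have Ep := nth_index [::] Hp.
  have i0 : index p (leaves t) != 0.
    by apply/eqP => E0; move/eqP: Hp1; apply; rewrite /leaf_at /= -{1}Ep E0.
  have iN : index p (leaves t) != nint t.
    apply/eqP => E0; move: Hl; have [m Hm] := last_leaf t.
    rewrite -Ep E0 Hm.
    by case: m {Hm} => [|m] //; rewrite nseqSr last_rcons.
  exists (index p (leaves t)); last by rewrite /leaf_at /= Ep.
  rewrite PD /leaf_at /= Ep Hl andbT; apply/andP; split; lia.
Qed.
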